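(* Let $r,s$ be real numbers with $s\ge 1$ and $r\le s-1$, and let $G$ be a finite group. Then $T_G(r,s)\le 0$, with equality if and only if $G$ is cyclic.
   Context: $o(x)$ is the order of $x$, $\varphi$ is Euler's totient function, and $C_N$ is the cyclic group of order $N$. For a finite group $G$ and reals $r,s$, $R_G(r,s) := \sum_{x\in G} \frac{o(x)^s}{\varphi(o(x))^r}$ and $T_G(r,s) := R_G(r,s) - R_{C_{|G|}}(r,s)$. *)

(* Defs.v *)
From mathcomp Require Import all_boot all_fingroup all_algebra all_solvable.
From Stdlib Require Import Reals.
Set Implicit Arguments. Unset Strict Implicit. Unset Printing Implicit Defensive.

(* R_G(r,s) = sum_{x in G} o(x)^s / phi(o(x))^r, with real exponents via Rpower
   (bases are >= 1, so Rpower is the usual real power). *)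
Definition RG (gT : finGroupType) (G : {set gT}) (r s : R) : R :=
  \big[Rplus/0%R]_(x in G)
     Rdiv (Rpower (INR (order x)) s) (Rpower (INR (totient (order x))) r).

(* R_{C_N}: the cyclic group of order N, realised as Zp N (= 'Z_N, or the
   trivial group when N <= 1); #|Zp N| = N for N > 0. *)
Definition RC (N : nat) (r s : R) : R := RG (Zp N) r s.

Definition TG (gT : finGroupType) (G : {set gT}) (r s : R) : R :=
  Rminus (RG G r s) (RC #|G| r s).

(* Main.v *)
Require Import Defs.
From mathcomp Require Import all_boot all_fingroup all_algebra all_solvable.
From Stdlib Require Import Reals.
From Stdlib Require Import Lra.
From mathcomp Require Import Rstruct.
From mathcomp Require Import zify.
Set Implicit Arguments. Unset Strict Implicit. Unset Printing Implicit Defensive.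
Import GRing.Theory Num.Theory.

Module MA1.

Lemma totient_mulp d p : prime p -> 0 < d ->
  totient (d * p) = (if p %| d then totient d * p else totient d * p.-1)%N.
Proof.
move=> pp d0; case: ifP => pd.
- have e1 : d = d`_p * d`_p^' by rewrite partnC.
  have lg : 0 < logn p d by rewrite logn_gt0 mem_primes pp d0 pd.
  have p0 : 0 < p := prime_gt0 pp.
  have e2 : (d * p)`_p = d`_p * p.
    by rewrite partnM // (part_pnat_id (pnat_id pp)).
  have e3 : (d * p)`_p^' = d`_p^'.
    rewrite partnM // [p`_p^']part_p'nat ?muln1 //.
    by rewrite pnatNK pnat_id.
  have dp0 : 0 < d * p by rewrite muln_gt0 d0.
  have cab : coprime d`_p d`_p^' by rewrite coprime_partC.
  have -> : totient (d*p) = totient (d`_p * p) * totient d`_p^'.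
    by rewrite -{1}(partnC p dp0) totient_coprime ?coprime_partC // e2 e3.
  have -> : totient d = totient d`_p * totient d`_p^'.
    by rewrite {1}e1 totient_coprime.
  rewrite p_part -expnSr !totient_pfactor //.
  rewrite -(prednK lg) expnS /=. nia.
- have cdp : coprime d p by rewrite coprime_sym prime_coprime // pd.
  by rewrite totient_coprime // (totient_prime pp).
Qed.

Lemma totient_dvd n d : 0 < n -> d %| n ->
  totient d <= totient n /\ totient n * d <= totient d * n.
Proof.
move=> n0 dn; have [k] := ubnP (n %/ d); elim: k d dn => // k IH d dn.
have d0 : 0 < d by apply: dvdn_gt0 dn.
have ndk : n = n %/ d * d by rewrite divnK.
case: (ltnP 1 (n %/ d)) => [q1 | q1] lt.
- set q := n %/ d in q1 ndk lt.
  have pp : prime (pdiv q) by apply: pdiv_prime.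
  have pq : pdiv q %| q by apply: pdiv_dvd.
  set p := pdiv q in pp pq.
  have p1 := prime_gt1 pp.
  have dpn : d * p %| n by rewrite ndk [d * p]mulnC dvdn_pmul2r.
  have lt' : n %/ (d * p) < k.
    rewrite divnMA -/q. have := @ltn_Pdiv q p p1 (ltnW q1). lia.
  have [h1 h2] := IH _ dpn lt'.
  have st := totient_mulp pp d0.
  have t0 : 0 < totient d by rewrite totient_gt0.
  have [a1 a2] : totient d <= totient (d * p) /\ totient (d * p) * d <= totient d * (d * p).
    by rewrite st; case: ifP => _; split; nia.
  split; first by apply: leq_trans h1.
  have dp0 : 0 < d * p by nia.
  have : totient n * d * (d * p) <= totient d * n * (d * p) by nia.
  by rewrite leq_pmul2r.
- have q0 : 0 < n %/ d by rewrite divn_gt0 // dvdn_leq.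
  have e : n %/ d = 1 by lia.
  have -> : n = d by rewrite ndk e mul1n.
  by split.
Qed.

Lemma totient_lb k n : 0 < n -> (forall q, prime q -> q %| n -> q <= k.+1) ->
  n <= k.+1 * totient n.
Proof.
elim: k n => [|k IH] n n0 hq.
- case: (ltnP 1 n) => n1.
    have := hq _ (pdiv_prime n1) (pdiv_dvd n); have := prime_gt1 (pdiv_prime n1); lia.
  have -> : n = 1 by lia. by [].
- have [qp|qnp] := boolP (prime k.+2 && (k.+2 %| n)).
  + case/andP: qp => qp qn.
    set q := k.+2 in qp qn *.
    have lg : 0 < logn q n by rewrite logn_gt0 mem_primes qp n0 qn.
    have m0 : 0 < n`_q^' by apply: part_gt0.
    have hm : forall r, prime r -> r %| n`_q^' -> r <= k.+1.
      move=> r rp rm.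
      have rn : r %| n := dvdn_trans rm (dvdn_part _ _).
      have := hq r rp rn.
      rewrite leq_eqVlt => /orP[/eqP er|]; last by rewrite ltnS.
      exfalso.
      have : q^'.-nat n`_q^' by apply: part_pnat.
      move/(pnatP _ m0) => /(_ r rp rm). by rewrite inE /= er; case/negP; rewrite inE.
    have ih := IH _ m0 hm.
    have cab : coprime n`_q n`_q^' by rewrite coprime_partC.
    have e : totient n = totient n`_q * totient n`_q^'.
      by rewrite -{1}(partnC q n0) totient_coprime.
    have e2 : n = n`_q * n`_q^' by rewrite partnC.
    rewrite e {1}e2.
    rewrite p_part totient_pfactor // -{1}(prednK lg) expnS.
    rewrite /q /= in ih *.
    set a := expn _ _. set b := n`__. set c := totient _.
    have f1 : k.+2 * a * b = k.+2 * (a * b) by nia.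
    have f2 : k.+2 * (k.+1 * a * c) = k.+2 * (a * (k.+1 * c)) by nia.
    by rewrite f1 f2 leq_mul2l leq_mul2l ih !orbT.
  + have hq' : forall q, prime q -> q %| n -> q <= k.+1.
      move=> q qp qn; have := hq q qp qn.
      rewrite leq_eqVlt => /orP[/eqP eq|]; last by rewrite ltnS.
      by move: qnp; rewrite -eq qp qn.
    have := IH _ n0 hq'. nia.
Qed.

End MA1.
Import MA1.

Module MA2.

Open Scope R_scope.

Definition ff (r s : R) (d : nat) : R :=
  Rdiv (Rpower (INR d) s) (Rpower (INR (totient d)) r).

Lemma ln_le' x y : 0 < x -> x <= y -> ln x <= ln y.
Proof. move=> x0 [xy|->]; [left; exact: ln_increasing | right; reflexivity]. Qed.

Lemma exp_le' x y : x <= y -> exp x <= exp y.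
Proof. move=> [xy|->]; [left; exact: exp_increasing | right; reflexivity]. Qed.

Lemma INR_pos (n : nat) : (0 < n)%nat -> 0 < INR n.
Proof. by move=> n0; apply: lt_0_INR; apply/ltP. Qed.

Lemma ffE r s d : ff r s d = exp (s * ln (INR d) - r * ln (INR (totient d))).
Proof. by rewrite /ff /Rpower /Rdiv /Rminus exp_plus exp_Ropp. Qed.

Lemma ff_pos r s d : 0 < ff r s d.
Proof. rewrite ffE; exact: exp_pos. Qed.

Lemma ff1 r s : ff r s 1 = 1.
Proof.
rewrite ffE. have -> : totient 1 = 1%nat by []. rewrite /= ln_1. 
have -> : s * 0 - r * 0 = 0 by ring. exact: exp_0.
Qed.

Lemma ffM r s (a b : nat) : coprime a b -> (0 < a)%nat -> (0 < b)%nat ->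
  ff r s (a * b) = ff r s a * ff r s b.
Proof.
move=> cab a0 b0; rewrite !ffE -exp_plus totient_coprime //.
have ta : 0 < INR (totient a) by apply: INR_pos; rewrite totient_gt0.
have tb : 0 < INR (totient b) by apply: INR_pos; rewrite totient_gt0.
have ia := INR_pos a0; have ib := INR_pos b0.
rewrite !mult_INR !ln_mult //; first (f_equal; ring).
Qed.

Lemma ff_dvd r s (d n : nat) : 1 <= s -> r <= s - 1 -> (0 < n)%nat -> (d %| n)%nat ->
  ff r s d * INR n <= ff r s n * INR d.
Proof.
move=> hs hrs n0 dn.
have d0 : (0 < d)%nat by apply: dvdn_gt0 dn.
have [t1 t2] := totient_dvd n0 dn.
have td : 0 < INR (totient d) by apply: INR_pos; rewrite totient_gt0.
have tn : 0 < INR (totient n) by apply: INR_pos; rewrite totient_gt0.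
have id := INR_pos d0; have inn := INR_pos n0.
rewrite -(exp_ln _ inn) -(exp_ln _ id) !ffE -!exp_plus.
apply: exp_le'.
have h1 : ln (INR (totient d)) <= ln (INR (totient n)).
  apply: ln_le' => //; apply: le_INR; exact/leP.
have h2 : ln (INR (totient n)) + ln (INR d) <= ln (INR (totient d)) + ln (INR n).
  rewrite -!ln_mult //; apply: ln_le'; first by apply: Rmult_lt_0_compat.
  rewrite -!mult_INR; apply: le_INR; exact/leP.
have h3 : ln (INR d) <= ln (INR n).
  apply: ln_le' => //; apply: le_INR; apply/leP; exact: dvdn_leq.
case: (Rle_lt_dec 0 r) => hr; nra.
Qed.

End MA2.
Import MA2.

Module MA3.

Open Scope R_scope.

Section Sums.
Variable I : finType.
Implicit Types (P : pred I) (F G : I -> R).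

Lemma convS P F : \big[Rplus/0]_(i | P i) F i = \big[GRing.add/GRing.zero]_(i | P i) F i.
Proof. by []. Qed.

Lemma Rsum_le P F G : (forall i, P i -> F i <= G i) ->
  \big[Rplus/0]_(i | P i) F i <= \big[Rplus/0]_(i | P i) G i.
Proof. move=> h; apply/RleP; apply: ler_sum => i Pi; apply/RleP; exact: h. Qed.

Lemma Rsum_const P c : \big[Rplus/0]_(i | P i) c = INR #|P| * c.
Proof.
by rewrite convS sumr_const -mulr_natl INRE.
Qed.

Lemma Rsum_mull P F c : \big[Rplus/0]_(i | P i) (c * F i) = c * \big[Rplus/0]_(i | P i) F i.
Proof.
by rewrite !convS -big_distrr.
Qed.

Lemma Rsum_ge0 P F : (forall i, P i -> 0 <= F i) -> 0 <= \big[Rplus/0]_(i | P i) F i.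
Proof.
move=> h; have := Rsum_le (F := fun _ => 0) h. by rewrite Rsum_const Rmult_0_r.
Qed.

Lemma Rsum_D1 P F j : P j -> \big[Rplus/0]_(i | P i) F i = F j + \big[Rplus/0]_(i | P i && (i != j)) F i.
Proof. move=> Pj; exact: (bigD1 j). Qed.

Lemma Rsum_ge1 P F j : P j -> (forall i, P i -> 0 <= F i) ->
  F j <= \big[Rplus/0]_(i | P i) F i.
Proof.
move=> Pj h; rewrite (Rsum_D1 _ Pj).
have : 0 <= \big[Rplus/0]_(i | P i && (i != j)) F i.
  apply: Rsum_ge0 => i /andP[Pi _]; exact: h.
lra.
Qed.

Lemma Rsum_pos P F j : P j -> (forall i, P i -> 0 < F i) -> 0 < \big[Rplus/0]_(i | P i) F i.
Proof.
move=> Pj h; have := Rsum_ge1 (F := F) Pj (fun i Pi => Rlt_le _ _ (h i Pi)).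
have := h j Pj; lra.
Qed.

Lemma Rsum_lt P F G j : P j -> (forall i, P i -> F i <= G i) -> F j < G j ->
  \big[Rplus/0]_(i | P i) F i < \big[Rplus/0]_(i | P i) G i.
Proof.
move=> Pj h hj; rewrite (Rsum_D1 F Pj) (Rsum_D1 G Pj).
have := Rsum_le (P := fun i => P i && (i != j)) (F := F) (G := G).
have h' : forall i, P i && (i != j) -> F i <= G i by move=> i /andP[Pi _]; exact: h.
move=> /(_ h'). lra.
Qed.

End Sums.

Lemma addRE (x y : R) : GRing.add x y = Rplus x y.
Proof. by []. Qed.

End MA3.
Import MA3.

Module MA4.

Open Scope R_scope.

Section Iso.
Variables r s : R.

Lemma RGE (gT : finGroupType) (A : {set gT}) :
  RG A r s = \big[Rplus/0]_(x in A) ff r s #[x]%g.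
Proof. by []. Qed.

Lemma RG_isog (gT rT : finGroupType) (G : {group gT}) (H : {group rT}) :
  G \isog H -> RG G r s = RG H r s.
Proof.
case/isogP => f injf <-; rewrite !RGE morphimEdom !convS big_imset /=.
  apply: eq_bigr => x Gx; by rewrite order_injm.
by move=> x y Gx Gy /=; apply: (injmP injf).
Qed.

Lemma Zp_cyc n : cyclic (Zp n).
Proof.
rewrite /Zp; case: ifP => _; last exact: cyclic1.
rewrite Zp_cycle; exact: cycle_cyclic.
Qed.

Lemma RG_cyclic (gT : finGroupType) (G : {group gT}) :
  cyclic G -> RG G r s = RC #|G| r s.
Proof.
move=> cG; apply: RG_isog.
by rewrite isog_cyclic_card // Zp_cyc card_Zp //=.
Qed.

End Iso.

End MA4.
Import MA4.

Module MA5.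

Open Scope R_scope.

Section CycLB.
Variables r s : R.

Lemma cyclic_lb (gT : finGroupType) (G : {group gT}) :
  cyclic G -> (1 < #|G|)%nat ->
  INR (totient #|G|) * ff r s #|G| + 1 <= RG G r s.
Proof.
case/cyclicP => g eG n1.
set S := [set x | generator <[g]> x].
have oS : #|S| = totient #|G| by rewrite /S -totient_gen eG.
have SG : forall x, x \in S -> (x \in G) /\ #[x]%g = #|G|.
  move=> x; rewrite inE /generator => /eqP e.
  by rewrite eG e cycle_id; split => //; rewrite /order.
have n1S : (1%g : gT) \notin S.
  apply/negP => /SG [_]; rewrite order1 => e; rewrite -e in n1; done.
rewrite RGE convS (bigID (mem S)) /= -!convS.
have eA : \big[Rplus/0]_(i in G | i \in S) ff r s #[i]%g = INR (totient #|G|) * ff r s #|G|.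
  rewrite (eq_bigr (fun _ => ff r s #|G|)); last by move=> x /andP[_ xS]; have [_ ->] := SG x xS.
  rewrite Rsum_const; congr (INR _ * _); rewrite -oS.
  apply: eq_card => x; rewrite unfold_in /=.
  case xS: (x \in S); rewrite ?andbF ?andbT //.
  by case: (SG _ xS).
have : 1 <= \big[Rplus/0]_(i in G | i \notin S) ff r s #[i]%g.
  rewrite -(ff1 r s) -(order1 gT).
  apply: (Rsum_ge1 (F := fun i => ff r s #[i]%g)); first by rewrite group1.
  move=> i _; apply: Rlt_le; exact: ff_pos.
move=> h; rewrite addRE; apply: Rplus_le_compat => //.
apply: Req_le; symmetry; exact: eA.
Qed.
End CycLB.

End MA5.
Import MA5.

Module MA6.

Open Scope R_scope.

Section Step1.
Variables r s : R.
Hypothesis hs : 1 <= s.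
Hypothesis hrs : r <= s - 1.

Lemma step1 (gT : finGroupType) (G : {group gT}) :
  (1 < #|G|)%nat ->
  (forall x, x \in G -> (max_pdiv #|G| * #[x]%g <= #|G|)%nat) ->
  RG G r s <= INR (totient #|G|) * ff r s #|G|.
Proof.
move=> n1 hx.
set n := #|G| in n1 hx *.
set p := max_pdiv n.
have pp : prime p by apply: max_pdiv_prime.
have p0 : (0 < p)%nat := prime_gt0 pp.
have n0 : (0 < n)%nat by lia.
have Pp : 0 < INR p := INR_pos p0.
have Fp : 0 < ff r s n := ff_pos r s n.
have key : forall x, x \in G -> ff r s #[x]%g <= ff r s n / INR p.
  move=> x Gx.
  have dx : (#[x]%g %| n)%nat by apply: order_dvdG.
  have h1 := ff_dvd hs hrs n0 dx.
  have h2 : INR p * INR #[x]%g <= INR n.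
    rewrite -mult_INR; apply: le_INR; apply/leP; exact: hx.
  have fx := ff_pos r s #[x]%g.
  apply: (Rmult_le_reg_r (INR p)) => //.
  rewrite /Rdiv Rmult_assoc Rinv_l; last by apply: Rgt_not_eq.
  rewrite Rmult_1_r.
  have xn : 0 < INR n := INR_pos n0.
  apply: (Rmult_le_reg_r (INR n)) => //. nra.
have hlb : (n <= (p.-1).+1 * totient n)%nat.
  apply: totient_lb => // q qp qn.
  rewrite prednK //; apply: max_pdiv_max.
  by rewrite mem_primes qp n0 qn.
rewrite prednK // in hlb.
have hlbR : INR n <= INR p * INR (totient n).
  rewrite -mult_INR; apply: le_INR; exact/leP.
apply: Rle_trans (_ : INR n * (ff r s n / INR p) <= _).
  rewrite RGE -[X in _ <= X * _]/(INR #|G|) -Rsum_const.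
  apply: Rsum_le => x; exact: key.
apply: (Rmult_le_reg_r (INR p)) => //.
rewrite /Rdiv Rmult_assoc Rmult_assoc Rinv_l; last by apply: Rgt_not_eq.
nra.
Qed.
End Step1.

End MA6.
Import MA6.

Module MA7.

Open Scope R_scope.

Lemma cyc_orders (gT : finGroupType) (P C : {group gT}) p x y :
  prime p -> (p.-group P)%g -> cyclic P -> C \subset P ->
  x \in P -> x \notin C -> y \in C ->
  (#[y]%g %| #[x]%g)%nat /\ (p * #[y]%g <= #[x]%g)%nat.
Proof.
move=> pp pP cP sCP Px nCx Cy.
have p1 := prime_gt1 pp.
have nd : ~~ (#[x]%g %| #|C|)%nat.
  rewrite (cardSg_cyclic cP) ?cycle_subG //.
have [i ei] := p_natP (mem_p_elt pP Px).
have [j ej] := p_natP (pgroupS sCP pP).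
have [l el] := p_natP (mem_p_elt (pgroupS sCP pP) Cy).
have lj : (l <= j)%nat.
  by rewrite -(dvdn_Pexp2l _ _ p1) -el -ej order_dvdG.
have ji : (j < i)%nat.
  by rewrite ltnNge -(dvdn_Pexp2l _ _ p1) -ei -ej.
rewrite ei el; split; first by rewrite dvdn_Pexp2l //; lia.
rewrite -expnS; apply: leq_pexp2l; lia.
Qed.

Section L5.
Variables r s : R.
Hypothesis hs : 1 <= s.
Hypothesis hrs : r <= s - 1.

Lemma RG_split (gT : finGroupType) (P C : {set gT}) F :
  C \subset P ->
  \big[Rplus/0]_(x in P) F x =
  \big[Rplus/0]_(x in C) F x + \big[Rplus/0]_(x in P :\: C) F x.
Proof.
move=> sCP; rewrite convS (bigID (mem C)) /= addRE -!convS.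
congr (_ + _); apply: eq_bigl => x; rewrite ?inE.
  by case xC: (x \in C); rewrite ?andbT ?andbF // (subsetP sCP).
by rewrite andbC.
Qed.

Lemma cyc_sub_lt (gT : finGroupType) (P C : {group gT}) p :
  prime p -> (p.-group P)%g -> cyclic P -> C \proper P ->
  INR #|P : C|%g * RG C r s < RG P r s.
Proof.
move=> pp pP cP prCP.
have sCP : C \subset P by case/andP: prCP.
have kp : (1 < #|P : C|%g)%nat by rewrite indexg_gt1; case/andP: prCP.
rewrite !RGE (RG_split _ sCP).
set A := \big[Rplus/0]_(x in C) _.
set B := \big[Rplus/0]_(x in P :\: C) _.
have A0 : 0 < A.
  apply: (Rsum_pos (j := 1%g)) => [|i _]; [exact: group1 | exact: ff_pos].
have c0 : (0 < #|C|)%nat := cardG_gt0 C.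
have pR : 2 <= INR p.
  have := prime_gt1 pp => h; change 2 with (INR 2); apply: le_INR; apply/leP; lia.
have key : forall x, x \in P :\: C -> INR p * A <= INR #|C| * ff r s #[x]%g.
  move=> x; rewrite inE => /andP[nCx Px].
  rewrite /A -[X in _ <= X * _]/(INR #|C|) -Rsum_const -Rsum_mull.
  apply: Rsum_le => y Cy.
  have [dyx pyx] := cyc_orders pp pP cP sCP Px nCx Cy.
  have ox0 : (0 < #[x]%g)%nat := order_gt0 x.
  have := ff_dvd hs hrs ox0 dyx.
  have h2 : INR p * INR #[y]%g <= INR #[x]%g.
    rewrite -mult_INR; apply: le_INR; exact/leP.
  have fy := ff_pos r s #[y]%g. have fx := ff_pos r s #[x]%g.
  have oy : 0 < INR #[y]%g := INR_pos (order_gt0 y).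
  move=> h1.
  apply: (Rmult_le_reg_r (INR #[y]%g)) => //. nra.
have hB : INR #|P :\: C| * (INR p * A) <= INR #|C| * B.
  rewrite -Rsum_const /B -Rsum_mull. apply: Rsum_le => x; exact: key.
have eD : #|P :\: C| = (#|P| - #|C|)%nat by rewrite cardsD (setIidPr sCP).
have eL : #|P| = (#|C| * #|P : C|%g)%nat by rewrite Lagrange.
rewrite eD eL in hB.
rewrite minus_INR in hB; last by apply/leP; rewrite leq_pmulr // ltnW.
rewrite mult_INR in hB.
have cR : 0 < INR #|C| := INR_pos c0.
have kR : 2 <= INR #|P : C|%g.
  change 2 with (INR 2); apply: le_INR; apply/leP; lia.
set k := INR #|P : C|%g in hB kR *. set c := INR #|C| in hB cR *.
have hB' : (k - 1) * (INR p * A) <= B.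
  apply: (Rmult_le_reg_l c) => //. nra.
have t0 : 0 < (k - 1) * A by nra.
have : (k - 1) * A < (k - 1) * (INR p * A).
  have -> : (k - 1) * (INR p * A) = INR p * ((k - 1) * A) by ring.
  nra.
lra.
Qed.

Lemma cyc_sub_le (gT : finGroupType) (P C : {group gT}) p :
  prime p -> (p.-group P)%g -> cyclic P -> C \subset P ->
  INR #|P : C|%g * RG C r s <= RG P r s.
Proof.
move=> pp pP cP sCP.
case: (boolP (C \proper P)) => prCP; first by left; exact: (cyc_sub_lt pp pP cP prCP).
have eCP : C :=: P.
  apply/eqP; rewrite eqEsubset sCP /=.
  move: prCP; rewrite properE sCP /=. by case: (P \subset C).
rewrite eCP indexgg /=. right; ring.
Qed.

End L5.

End MA7.
Import MA7.

Module MA8.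

Local Open Scope group_scope.
Section Step2G.
Variables (gT : finGroupType) (G P : {group gT}) (p : nat).
Hypothesis pp : prime p.
Hypothesis sylP : p.-Sylow(G) P.
Hypothesis nPG : P <| G.
Hypothesis cP : cyclic P.

Local Open Scope group_scope.

Lemma sPG : P \subset G. Proof. exact: normal_sub. Qed.
Lemma nGP : G \subset 'N(P). Proof. exact: normal_norm. Qed.
Lemma pP : p.-group P. Proof. exact: pHall_pgroup sylP. Qed.

Lemma constt_in x : x \in G -> x.`_p \in P.
Proof.
move=> Gx; rewrite (mem_normal_Hall sylP nPG) ?p_elt_constt //.
by apply: (subsetP _ _ (cycle_constt p x)); rewrite cycle_subG.
Qed.

Lemma consttN_in x : x \in G -> x.`_p^' \in G.
Proof.
move=> Gx; by apply: (subsetP _ _ (cycle_constt p^' x)); rewrite cycle_subG.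
Qed.

Lemma order_coset_p' z : z \in G -> p^'.-elt z -> #[coset P z] = #[z].
Proof.
move=> Gz p'z.
have Nz : z \in 'N(P) := subsetP nGP z Gz.
apply/eqP; rewrite eqn_dvd; apply/andP; split.
  exact: (morph_order (coset_morphism P) Nz).
rewrite order_dvdn.
have h : z ^+ #[coset P z] \in P.
  apply: coset_idr; first by rewrite groupX.
  by rewrite morphX // expg_order.
have : z ^+ #[coset P z] \in P :&: <[z]> by rewrite inE h mem_cycle.
rewrite coprime_TIg ?inE //.
rewrite (@pnat_coprime p) //; first exact: pP.
Qed.

Lemma coset_constt x : x \in G -> coset P x = coset P x.`_p^'.
Proof.
move=> Gx; rewrite -{1}(consttC p x) morphM ?(subsetP nGP) ?constt_in ?consttN_in //.
  by rewrite /= (coset_id (constt_in Gx)) mul1g.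
by rewrite (subsetP sPG) ?constt_in.
Qed.

Lemma order_split (x : gT) : #[x] = (#[x.`_p] * #[x.`_p^'])%nat.
Proof. by rewrite !order_constt partnC. Qed.

Lemma coprime_split (x : gT) : coprime #[x.`_p] #[x.`_p^'].
Proof. apply: (@pnat_coprime p); [exact: p_elt_constt | exact: p_elt_constt]. Qed.

Lemma ff_split r s x : x \in G ->
  ff r s #[x] = (ff r s #[x.`_p] * ff r s #[coset P x])%R.
Proof.
move=> Gx; rewrite coset_constt // order_coset_p' ?consttN_in ?p_elt_constt //.
by rewrite order_split ffM ?coprime_split ?order_gt0.
Qed.

Lemma coset_eq_mem a b : a \in G -> b \in G -> coset P a = coset P b -> a * b^-1 \in P.
Proof.
move=> Ga Gb e; rewrite -mem_rcoset.
by apply/rcoset_kercosetP => //; apply: (subsetP nGP).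
Qed.

Lemma SZ_class g0 x : g0 \in G -> p^'.-elt g0 -> x \in G ->
  coset P x = coset P g0 -> x.`_p^' \in g0 ^: P.
Proof.
move=> Gg0 p'g0 Gx e.
set z := x.`_p^'.
have Gz : z \in G := consttN_in Gx.
have p'z : p^'.-elt z := p_elt_constt _ _.
have ez : coset P z = coset P g0 by rewrite -coset_constt.
have nKP : <[g0]> \subset 'N(P) by rewrite cycle_subG (subsetP nGP).
have sK1 : <[z]> \subset P * <[g0]>.
  rewrite -norm_joinEr // cycle_subG /= norm_joinEr //.
  rewrite -(mulgKV g0 z); apply: mem_mulg; last exact: cycle_id.
  exact: coset_eq_mem.
have co : coprime #|P| #|<[g0]>| by apply: (@pnat_coprime p); [exact: pP | exact: p'g0].
have oK : #|<[z]>| = #|<[g0]>|.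
  by rewrite -!/(order _) -(order_coset_p' Gz p'z) -(order_coset_p' Gg0 p'g0) ez.
have [u Pu eK] := SchurZassenhaus_trans_sol (abelian_sol (cyclic_abelian cP)) nKP sK1 co oK.
have Gu : u \in G := subsetP sPG u Pu.
have : z \in <[g0 ^ u]> by rewrite cycleJ -eK cycle_id.
case/cycleP => i ezi.
set w := g0 ^ u in ezi.
have Gw : w \in G by rewrite groupJ.
have ew : coset P w = coset P g0.
  rewrite /w morphJ ?(subsetP nGP) //= (coset_id Pu) conjg1 //.
have h1 : z * w^-1 \in P by apply: coset_eq_mem => //; rewrite ez ew.
have h2 : z * w^-1 \in <[w]> by rewrite ezi groupM ?groupV ?mem_cycle ?cycle_id.
have co2 : coprime #|P| #|<[w]>|.
  rewrite -/(order w) /w orderJ; exact: co.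
have : z * w^-1 \in P :&: <[w]> by rewrite inE h1 h2.
rewrite coprime_TIg // inE => /eqP/(congr1 (fun t => t * w)).
rewrite mulgKV mul1g => ->. exact: memJ_class.
Qed.

Lemma constt_commute (x : gT) : commute x.`_p x.`_p^'.
Proof.
apply: (centsP (cycle_abelian x)); rewrite ?cycle_constt //.
Qed.

Lemma constt_mulP y z : y \in P -> p^'.-elt z -> commute y z ->
  (y * z).`_p = y /\ (y * z).`_p^' = z.
Proof.
move=> Py p'z cyz; rewrite !consttM //.
have py : p.-elt y := mem_p_elt pP Py.
rewrite (constt_p_elt py) (constt_p_elt p'z).
have -> : z.`_p = 1 by apply/constt1P.
have -> : y.`_p^' = 1 by apply/constt1P; rewrite /p_elt pnatNK.
by rewrite mulg1 mul1g.
Qed.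

Lemma centP_class g0 z : z \in g0 ^: P -> 'C_P[z] = 'C_P[g0].
Proof.
case/imsetP => u Pu ->.
rewrite cent1J -{1}(conjGid Pu) -conjIg.
apply/normP; apply: (subsetP (cent_sub _)).
apply: (subsetP (centS (subsetIl P 'C[g0]))).
by apply: (subsetP (cyclic_abelian cP)).
Qed.

Lemma coset_class_eq g0 z : g0 \in G -> z \in g0 ^: P -> coset P z = coset P g0.
Proof.
move=> Gg0 /imsetP[u Pu ->].
have Gu : u \in G := subsetP sPG u Pu.
by rewrite morphJ ?(subsetP nGP) //= (coset_id Pu) conjg1.
Qed.

Lemma fiber_eq g0 z x : g0 \in G -> p^'.-elt g0 -> z \in g0 ^: P ->
  ((x \in G) && (coset P x == coset P g0) && (x.`_p^' == z)) =
  (x \in (fun y => y * z) @: 'C_P[z]).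
Proof.
move=> Gg0 p'g0 zc.
have Gz : z \in G by case/imsetP: zc => u Pu ->; rewrite groupJ // (subsetP sPG).
have p'z : p^'.-elt z by case/imsetP: zc => u Pu ->; rewrite p_eltJ.
apply/idP/idP.
- case/andP => /andP[Gx /eqP ec] /eqP ez.
  apply/imsetP; exists x.`_p; last by rewrite -ez consttC.
  apply/subcent1P; split; first exact: constt_in.
  rewrite -ez; apply: commute_sym; exact: constt_commute.
- case/imsetP => y /subcent1P[Py cyz] ->.
  have [e1 e2] := constt_mulP Py p'z (commute_sym cyz).
  rewrite e2 eqxx andbT groupM ?Gz ?(subsetP sPG y Py) //=.
  by rewrite coset_kerl // (coset_class_eq Gg0 zc) eqxx.
Qed.

End Step2G.


Section Step2R.
Variables (gT : finGroupType) (G P : {group gT}) (p : nat).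
Hypothesis pp : prime p.
Hypothesis sylP : p.-Sylow(G) P.
Hypothesis nPG : P <| G.
Hypothesis cP : cyclic P.
Variables r s : R.
Local Open Scope R_scope.

Lemma fiber_sum g0 z : g0 \in G -> p^'.-elt g0 -> z \in g0 ^: P ->
  \big[Rplus/0]_(x in G | (coset P x == coset P g0) && (x.`_p^' == z)) ff r s #[x.`_p]%g
  = RG 'C_P[g0] r s.
Proof.
move=> Gg0 p'g0 zc.
have p'z : p^'.-elt z by case/imsetP: zc => u Pu ->; rewrite p_eltJ.
rewrite -(centP_class cP zc) RGE.
rewrite convS (eq_bigl (fun x => x \in (fun y => (y * z)%g) @: 'C_P[z])); last first.
  by move=> x; rewrite -(fiber_eq sylP nPG x Gg0 p'g0 zc) andbA.
rewrite big_imset /=; last by move=> a b _ _; apply: mulIg.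
rewrite -convS; apply: eq_bigr => y /subcent1P[Py cyz].
by have [-> _] := constt_mulP sylP Py p'z (commute_sym cyz).
Qed.

Lemma coset_sum g0 : g0 \in G -> p^'.-elt g0 ->
  \big[Rplus/0]_(x in G | coset P x == coset P g0) ff r s #[x.`_p]%g
  = INR #|P : 'C_P[g0]|%g * RG 'C_P[g0] r s.
Proof.
move=> Gg0 p'g0.
rewrite convS (partition_big (fun x => x.`_p^'%g) (mem (g0 ^: P))) /=; last first.
  move=> x /andP[Gx /eqP e]; exact: (SZ_class sylP nPG cP Gg0 p'g0 Gx e).
rewrite -convS.
rewrite (eq_bigr (fun _ => RG 'C_P[g0] r s)); last first.
  move=> z zc; rewrite -(fiber_sum Gg0 p'g0 zc) convS.
  by apply: eq_bigl => x; rewrite andbA.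
by rewrite Rsum_const index_cent1.
Qed.

End Step2R.

End MA8.
Import MA8.

Module MA9.

Local Open Scope group_scope.
Section Step2M.
Variables (gT : finGroupType) (G P : {group gT}) (p : nat).
Hypothesis pp : prime p.
Hypothesis sylP : p.-Sylow(G) P.
Hypothesis nPG : P <| G.
Hypothesis cP : cyclic P.
Variables r s : R.
Hypothesis hs : (1 <= s)%R.
Hypothesis hrs : (r <= s - 1)%R.

Definition SC (C : coset_of P) : R :=
  \big[Rplus/0%R]_(x in G | coset P x == C) ff r s #[x.`_p].

Lemma SC_le w : w \in G -> (SC (coset P w) <= RG P r s)%R.
Proof.
move=> Gw; rewrite /SC (coset_constt sylP nPG Gw).
rewrite (coset_sum sylP nPG cP) ?consttN_in ?p_elt_constt //.
apply: (cyc_sub_le hs hrs pp (pHall_pgroup sylP) cP).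
exact: subsetIl.
Qed.

Lemma SC_lt w : w \in G -> w \notin 'C(P) -> (SC (coset P w) < RG P r s)%R.
Proof.
move=> Gw nwC; rewrite /SC (coset_constt sylP nPG Gw).
rewrite (coset_sum sylP nPG cP) ?consttN_in ?p_elt_constt //.
apply: (cyc_sub_lt hs hrs pp (pHall_pgroup sylP) cP).
rewrite properE subsetIl /= subsetI subxx /= sub_cent1.
apply: contra nwC => c0.
rewrite -(consttC p w) groupM //.
have := constt_in sylP nPG Gw.
by apply: (subsetP (cyclic_abelian cP)).
Qed.

Lemma SC_eq w : w \in G -> P \subset 'Z(G) -> SC (coset P w) = RG P r s.
Proof.
move=> Gw sPZ; rewrite /SC (coset_constt sylP nPG Gw).
rewrite (coset_sum sylP nPG cP) ?consttN_in ?p_elt_constt //.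
have -> : 'C_P[w.`_p^'] = P.
  apply/setIidPl; rewrite sub_cent1.
  have := subset_trans sPZ (subsetIr G 'C(G)).
  rewrite centsC => /subsetP; apply; exact: consttN_in.
by rewrite indexgg /=; ring.
Qed.

Lemma RG_decomp :
  RG G r s = \big[Rplus/0%R]_(C in G / P) (ff r s #[C] * SC C)%R.
Proof.
rewrite RGE (eq_bigr (fun x => ff r s #[x.`_p] * ff r s #[coset P x]))%R; last first.
  move=> x Gx; exact: (ff_split sylP nPG).
rewrite convS (partition_big (fun x => coset P x) (mem (G / P))) /=; last first.
  by move=> x Gx; apply: mem_quotient.
rewrite -convS; apply: eq_bigr => C _.
rewrite /SC -Rsum_mull convS -convS.
by apply: eq_bigr => x /andP[_ /eqP <-]; rewrite Rmult_comm.
Qed.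

Lemma quo_rep C : C \in G / P -> exists2 w, w \in G & C = coset P w.
Proof. by case/morphimP => w _ Gw ->; exists w. Qed.

Lemma RHS_decomp :
  (RG P r s * RG (G / P)%g r s)%R = \big[Rplus/0%R]_(C in G / P) (ff r s #[C] * RG P r s)%R.
Proof.
rewrite [RG (G / P)%g r s]RGE -Rsum_mull; apply: eq_bigr => C _; exact: Rmult_comm.
Qed.

Lemma step2_le : (RG G r s <= RG P r s * RG (G / P)%g r s)%R.
Proof.
rewrite RG_decomp RHS_decomp; apply: Rsum_le => C /quo_rep[w Gw ->].
apply: Rmult_le_compat_l; [exact: Rlt_le (ff_pos _ _ _) | exact: SC_le].
Qed.

Lemma step2_lt : ~~ (P \subset 'C(G)) -> (RG G r s < RG P r s * RG (G / P)%g r s)%R.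
Proof.
move=> ncP.
have [w Gw nwC] : exists2 w, w \in G & w \notin 'C(P).
  move: ncP; rewrite centsC => /subsetPn [w Gw nwC]; by exists w.
rewrite RG_decomp RHS_decomp; apply: (Rsum_lt (j := coset P w)).
- exact: mem_quotient.
- move=> C /quo_rep[w' Gw' ->].
  apply: Rmult_le_compat_l; [exact: Rlt_le (ff_pos _ _ _) | exact: SC_le].
- apply: Rmult_lt_compat_l; [exact: ff_pos | exact: SC_lt].
Qed.

Lemma step2_eq : P \subset 'Z(G) -> RG G r s = (RG P r s * RG (G / P)%g r s)%R.
Proof.
move=> sPZ; rewrite RG_decomp RHS_decomp; apply: eq_bigr => C /quo_rep[w Gw ->].
by rewrite SC_eq.
Qed.

End Step2M.

End MA9.
Import MA9.

Module MA10.

Local Open Scope group_scope.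

Lemma normal_sylow_elt (gT : finGroupType) (G : {group gT}) p x :
  prime p -> x \in G -> (#|G| < p * #[x])%nat ->
  exists P : {group gT}, [/\ p.-Sylow(G) P, P <| G & cyclic P].
Proof.
move=> pp Gx lt.
set P0 := <[x.`_p]>%G.
have sxG : <[x]> \subset G by rewrite cycle_subG.
set k := #|G : <[x]>|.
have eL : #|G| = (#[x] * k)%nat by rewrite /k /order Lagrange.
have k0 : (0 < k)%nat by apply: indexg_gt0.
have ox0 : (0 < #[x])%nat := order_gt0 x.
have kp : (k < p)%nat.
  rewrite eL in lt. rewrite -(ltn_pmul2l ox0). lia.
have pk : ~~ (p %| k)%nat.
  by apply/negP => /(dvdn_leq k0); rewrite leqNgt kp.
have sP0x : P0 \subset <[x]> by rewrite cycle_subG cycle_constt.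
have sylP0 : p.-Sylow(G) P0.
  rewrite pHallE (subset_trans sP0x sxG) /= -/(order _) order_constt eL.
  rewrite partnM // (part_p'nat (n := k)) ?muln1 //.
  by rewrite p'natE.
have nxP : <[x]> \subset 'N_G(P0).
  rewrite subsetI sxG /=.
  apply: subset_trans (cent_sub _).
  rewrite centsC; apply: subset_trans sP0x _.
  exact: cycle_abelian.
have sNG : 'N_G(P0) \subset G := subsetIl _ _.
have hdiv := Lagrange_index sNG nxP.
have i1 : #|G : 'N_G(P0)| = 1%nat.
  have := card_Syl_mod G pp; rewrite (card_Syl sylP0).
  have ile : (#|G : 'N_G(P0)| <= k)%nat.
    rewrite /k -hdiv; apply: leq_pmulr; exact: indexg_gt0.
  rewrite modn_small //; exact: leq_ltn_trans ile kp.
have eN := index1g sNG i1.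
exists P0; split => //; last exact: cycle_cyclic.
rewrite /normal (pHall_sub sylP0) /=.
by rewrite -eN subsetIr.
Qed.

End MA10.
Import MA10.

Module MA11.

Local Open Scope group_scope.

Lemma cyclic_glue (gT : finGroupType) (G P : {group gT}) p :
  p.-Sylow(G) P -> P <| G -> cyclic P -> P \subset 'C(G) -> cyclic (G / P) ->
  cyclic G.
Proof.
move=> sylP nPG cP sPC /cyclicP[c eQ].
have cQ : c \in G / P by rewrite eQ cycle_id.
have [g Gg ec] := quo_rep cQ.
set b := g.`_p^'.
have Gb : b \in G := consttN_in p Gg.
have p'b : p^'.-elt b := p_elt_constt _ _.
have ob : #[b] = #|G / P|.
  by rewrite -(order_coset_p' sylP nPG Gb p'b) -(coset_constt sylP nPG Gg) -ec eQ.
have [a eP] := cyclicP cP.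
have Pa : a \in P by rewrite eP cycle_id.
have oa : #[a] = #|P| by rewrite eP.
have cab : commute a b.
  have := subsetP sPC a Pa => /centP; apply. exact: Gb.
have coab : coprime #[a] #[b].
  apply: (@pnat_coprime p) => //. rewrite oa; exact: (pHall_pgroup sylP).
have oab : #[a * b] = #|G|.
  rewrite orderM // oa ob card_quotient ?normal_norm // Lagrange //.
  exact: normal_sub.
apply/cyclicP; exists (a * b); apply/eqP; rewrite eq_sym eqEcard.
rewrite cycle_subG groupM ?Gb ?(subsetP (normal_sub nPG) a Pa) //=.
by rewrite -/(order _) oab.
Qed.

End MA11.
Import MA11.

Module MA12.

Local Open Scope group_scope.

Lemma RC_mult (n p : nat) r s : (0 < n)%nat -> prime p ->
  RC n r s = (RC (n`_p) r s * RC (n %/ n`_p) r s)%R.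
Proof.
move=> n0 pp.
have cZ := Zp_cyc n.
have oZ : #|Zp n| = n by rewrite card_Zp.
have [Q sylQ] := Sylow_exists p (Zp n).
have aZ := cyclic_abelian cZ.
have sQZ := pHall_sub sylQ.
have nQZ : Q <| Zp n by rewrite -sub_abelian_normal.
have cQ : cyclic Q := cyclicS sQZ cZ.
have sQC : Q \subset 'Z(Zp n).
  rewrite subsetI sQZ /=; exact: subset_trans sQZ aZ.
rewrite /RC (step2_eq sylQ nQZ cQ r s sQC).
rewrite (RG_cyclic r s cQ) (RG_cyclic r s (quotient_cyclic Q cZ)).
rewrite (card_Hall sylQ) oZ card_quotient ?normal_norm // -divgS //.
by rewrite (card_Hall sylQ) oZ.
Qed.

Lemma RG_pos (gT : finGroupType) (H : {group gT}) r s : (0 < RG H r s)%R.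
Proof.
rewrite RGE; apply: (Rsum_pos (j := 1)); first exact: group1.
move=> i _; exact: ff_pos.
Qed.

Section Main.
Variables r s : R.
Hypothesis hs : (1 <= s)%R.
Hypothesis hrs : (r <= s - 1)%R.

Lemma noncyclic_lt n : forall (gT : finGroupType) (G : {group gT}),
  #|G| = n -> ~~ cyclic G -> (RG G r s < RC n r s)%R.
Proof.
elim/ltn_ind: n => n IH gT G oG ncG.
have n1 : (1 < n)%nat.
  rewrite ltnNge; apply/negP => h; move/negP: ncG; apply.
  by apply: cyclic_small; rewrite oG; apply: leq_trans h _.
have n0 : (0 < n)%nat by lia.
set p := max_pdiv n.
have pp : prime p by apply: max_pdiv_prime.
have [hx|hx] := boolP [forall x in G, (p * #[x] <= n)%nat].
- have n1' : (1 < #|G|)%nat by rewrite oG.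
  have h1 := step1 hs hrs n1'.
  rewrite oG in h1.
  have h2 := cyclic_lb r s (Zp_cyc n).
  rewrite card_Zp // in h2.
  move: h2 => /(_ n1) h2.
  have h3 : (RG G r s <= INR (totient n) * ff r s n)%R.
    by apply: h1 => x Gx; move/forall_inP: hx => /(_ x Gx).
  rewrite /RC; apply: (Rlt_le_trans _ _ _ _ h2); lra.
- case/forall_inPn: hx => x Gx; rewrite -ltnNge => lt.
  rewrite -oG in lt.
  have [P [sylP nPG cP]] := normal_sylow_elt pp Gx lt.
  have sPG : P \subset G := pHall_sub sylP.
  have oP : #|P| = (n`_p)%nat by rewrite (card_Hall sylP) oG.
  have oQ : #|G / P| = (n %/ (n`_p)%nat)%nat.
    by rewrite card_quotient ?normal_norm // -divgS // oP oG.
  have np1 : (1 < (n`_p)%nat)%nat by rewrite p_part_gt1 pi_max_pdiv.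
  have ltQ : (n %/ (n`_p)%nat < n)%nat by apply: ltn_Pdiv.
  rewrite (RC_mult r s n0 pp) -oQ -oP -(RG_cyclic r s cP).
  have Ppos := RG_pos P r s.
  have [cQ|ncQ] := boolP (cyclic (G / P)).
  + rewrite -(RG_cyclic r s cQ).
    apply: (step2_lt pp sylP nPG cP hs hrs).
    apply/negP => sPC; move/negP: ncG; apply.
    exact: (cyclic_glue sylP nPG cP sPC cQ).
  + have hQ := IH _ ltQ _ (G / P)%G oQ ncQ.
    rewrite -oQ in hQ.
    apply: (Rle_lt_trans _ _ _ (step2_le pp sylP nPG cP hs hrs)).
    by apply: Rmult_lt_compat_l.
Qed.

End Main.

End MA12.
Import MA12.

Theorem mainTheorem6 (r s : R) (hs : (1 <= s)%R) (hrs : (r <= s - 1)%R)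
  (gT : finGroupType) (G : {group gT}) :
  (TG G r s <= 0)%R /\ (TG G r s = 0%R <-> cyclic G).
Proof.
rewrite /TG.
have [cG|ncG] := boolP (cyclic G).
- rewrite (RG_cyclic r s cG).
  have e : forall a : R, (a - a = 0)%R by move=> a; ring.
  rewrite e; split; [exact: Rle_refl | split => //].
- have h := noncyclic_lt hs hrs (erefl #|G|) ncG.
  have h' := Rlt_minus _ _ h.
  split; first by left; exact: h'.
  split => [e|]; last by move/negP: ncG.
  exfalso; move: h'; rewrite e; exact: Rlt_irrefl.
Qed.
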